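(* Let $S$ be a finite nonempty set of positive integers, and fix integers $a,b,t\ge 1$ and $c\ge 0$. Let $X$ be a periodic independent set of $G(S)$, with blocks $(B_i)_{i\in\mathbb{Z}}$ and $t$-frames $(F_j)_{j\in\mathbb{Z}}$. Define the charge $\mu(B_i)=a|B_i|-b$. Let $d$ be an $S$-local discharging rule on blocks, defining $\mu^*(B_i)=\mu(B_i)+\sum_{j}d(B_j,B_i)$. Define $\nu^*(F_j)=\sum_{B_i\in F_j}\mu^*(B_i)$ for each $t$-frame $F_j$, and let $d'$ be an $S$-local discharging rule on $t$-frames, defining $\nu'(F_j)=\nu^*(F_j)+\sum_{i}d'(F_i,F_j)$. If $\nu'(F_j)\ge c$ for all $j$, then $\delta(X)\le\frac{at}{bt+c}$.
   Context: The distance graph $G(S)$ has vertex set $\mathbb{Z}$, $i,j$ adjacent iff $|i-j|\in S$; the density of $X\subseteq\mathbb{Z}$ is $\delta(X)=\limsup_{N\to\infty}\frac{|X\cap[-N,N]|}{2N+1}$; $X$ is periodic if $X+p=X$ for some $p\ge1$. For an independent set $X=\{\dots<x_{-1}<x_0<x_1<\dots\}$ indexed by $\mathbb{Z}$ in increasing order, the $i$-th block is $B_i=\{x_i,x_i+1,\dots,x_{i+1}-1\}$ (so $|B_i|=x_{i+1}-x_i$); the block structure of a sequence of consecutive blocks is the list of their sizes in order. A $t$-frame is $F_j=\{B_j,\dots,B_{j+t-1}\}$. A discharging rule on blocks is a function $d$ from ordered pairs of blocks to $\mathbb{Z}$ with $d(B_i,B_j)=-d(B_j,B_i)$; it is $S$-local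 if there is $m=m(S)$ such that $d(B_i,B_j)=0$ whenever $|x_i-x_j|>m$, and when $|x_i-x_j|\le m$, $d(B_i,B_j)$ depends only on the block structure of $B_{i-m},\dots,B_{i+m}$. A discharging rule on frames is a function $d'$ from ordered pairs of $t$-frames to $\mathbb{Z}$ with $d'(F_i,F_j)=-d'(F_j,F_i)$; it is $S$-local if there is $m'=m'(S)$ such that $d'(F_i,F_j)=0$ whenever $|i-j|>m'$, and when $|i-j|\le m'$, $d'(F_i,F_j)$ depends only on the block structure of the frames $F_{i-m'},\dots,F_{i+m'}$. *)

(* Defs.v *)
From mathcomp Require Import all_boot all_order all_algebra.
From mathcomp Require Import all_classical all_reals all_analysis.
Set Implicit Arguments. Unset Strict Implicit. Unset Printing Implicit Defensive.
Import Order.TTheory GRing.Theory Num.Theory.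
Local Open Scope ring_scope.

Definition independent (S : seq nat) (X : int -> bool) : Prop :=
  forall u v : int, X u -> X v -> (absz (u - v) \notin S).

Definition periodic_set (X : int -> bool) : Prop :=
  exists p : nat, (0 < p)%N /\ forall n : int, X (n + p%:Z) = X n.

Definition enumerates (X : int -> bool) (x : int -> int) : Prop :=
  (forall i : int, x i < x (i + 1)) /\ (forall n : int, X n <-> exists i, x i = n).

(* |B_i| = x_{i+1} - x_i *)
Definition bsize (x : int -> int) (i : int) : int := x (i + 1) - x i.

(* block structure of B_{i-m}, ..., B_{i+m} *)
Definition bwindow (x : int -> int) (m : nat) (i : int) : seq int :=
  [seq bsize x (i - m%:Z + k%:Z) | k <- iota 0 (2 * m).+1].

(* block structure of the t-frame F_j = {B_j, ..., B_{j+t-1}} *)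
Definition fstruct (x : int -> int) (t : nat) (j : int) : seq int :=
  [seq bsize x (j + l%:Z) | l <- iota 0 t].

Definition fwindow (x : int -> int) (t m : nat) (i : int) : seq (seq int) :=
  [seq fstruct x t (i - m%:Z + k%:Z) | k <- iota 0 (2 * m).+1].

(* d : discharging rule on blocks, d i j = d(B_i, B_j) *)
Definition block_rule_local (x : int -> int) (d : int -> int -> int) (m : nat) : Prop :=
  (forall i j, d i j = - d j i) /\
  exists D : seq int -> int -> int,
    forall i j,
      ((m%:Z < `|x i - x j|) -> d i j = 0) /\
      ((`|x i - x j| <= m%:Z) -> d i j = D (bwindow x m i) (j - i)).

Definition frame_rule_local (x : int -> int) (t : nat) (d' : int -> int -> int) (m : nat)
  : Prop :=
  (forall i j, d' i j = - d' j i) /\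
  exists D : seq (seq int) -> int -> int,
    forall i j,
      ((m%:Z < `|i - j|) -> d' i j = 0) /\
      ((`|i - j| <= m%:Z) -> d' i j = D (fwindow x t m i) (j - i)).

Definition isum (lo hi : int) (f : int -> int) : int :=
  \sum_(k < absz (hi - lo + 1)) f (lo + k%:Z).

Definition mu (a b : nat) (x : int -> int) (i : int) : int :=
  a%:Z * bsize x i - b%:Z.

(* mu*(B_i) = mu(B_i) + sum_j d(B_j, B_i); only j with |j - i| <= m can
   contribute, since d(B_j,B_i) = 0 when |x_j - x_i| > m and |x_j - x_i| >= |j - i| *)
Definition mustar (a b : nat) (x : int -> int) (d : int -> int -> int) (m : nat)
  (i : int) : int :=
  mu a b x i + isum (i - m%:Z) (i + m%:Z) (fun j => d j i).

Definition nustar (a b t : nat) (x : int -> int) (d : int -> int -> int) (m : nat)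
  (j : int) : int :=
  \sum_(l < t) mustar a b x d m (j + l%:Z).

(* nu'(F_j) = nu*(F_j) + sum_i d'(F_i, F_j); only |i - j| <= m' contribute *)
Definition nuprime (a b t : nat) (x : int -> int) (d : int -> int -> int) (m : nat)
  (d' : int -> int -> int) (m' : nat) (j : int) : int :=
  nustar a b t x d m j + isum (j - m'%:Z) (j + m'%:Z) (fun i => d' i j).

Definition countX (X : int -> bool) (N : nat) : nat :=
  (\sum_(k < (2 * N).+1) nat_of_bool (X ((Posz (nat_of_ord k) - Posz N)%R)))%N.

Definition density (R : realType) (X : int -> bool) : \bar R :=
  limn_esup (fun N : nat => ((countX X N)%:R / ((2 * N).+1)%:R : R)%:E).

(* Main.v *)
Require Import Defs.
From mathcomp Require Import all_boot all_order all_algebra.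
From mathcomp Require Import all_classical all_reals all_analysis.
From mathcomp Require Import zify ring lra.
Import Order.TTheory GRing.Theory Num.Theory.
Local Open Scope ring_scope.


Lemma x_addn (x : int -> int) : (forall i, x i < x (i+1)) ->
  forall i (k : nat), x i + k%:Z <= x (i + k%:Z).
Proof.
move=> h i; elim=> [|k IH]; first by rewrite !addr0.
have := h (i + k%:Z); have -> : i + (k.+1)%:Z = i + k%:Z + 1 by lia.
lia.
Qed.

Lemma x_lt (x : int -> int) : (forall i, x i < x (i+1)) ->
  forall i j, i < j -> x i < x j.
Proof.
move=> h i j ij.
have := x_addn x h (i + 1) (absz (j - (i+1))%R).
have -> : i + 1 + (absz (j - (i + 1))%R)%:Z = j by lia.
have := h i; lia.
Qed.

Lemma x_le (x : int -> int) : (forall i, x i < x (i+1)) ->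
  forall i j, (x i <= x j) = (i <= j).
Proof.
move=> h i j; apply/idP/idP.
  by move=> H; rewrite leNgt; apply/negP=> /(x_lt x h); lia.
rewrite le_eqVlt => /orP[/eqP->//|/(x_lt x h)]; lia.
Qed.

Lemma x_inj (x : int -> int) : (forall i, x i < x (i+1)) ->
  forall i j, x i = x j -> i = j.
Proof.
move=> h i j e; apply/eqP; rewrite eq_le -(x_le x h i j) -(x_le x h j i) e; lia.
Qed.

Lemma x_ltE (x : int -> int) : (forall i, x i < x (i+1)) ->
  forall i j, (x i < x j) = (i < j).
Proof. by move=> h i j; rewrite !ltNge (x_le x h). Qed.

Lemma shift_up (X : int -> bool) (x : int -> int) (p : int) :
  enumerates X x -> (forall n, X (n + p) = X n) ->
  forall i j, x j = x i + p -> x (j+1) = x (i+1) + p.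
Proof.
move=> [h hX] hp i j e.
have [s es] : exists s, x s = x (i+1) + p.
  by apply/hX; rewrite hp; apply/hX; exists (i+1).
have [r er] : exists r, x r = x (j+1) - p.
  by apply/hX; rewrite -hp subrK; apply/hX; exists (j+1).
have h1 : j < s.
  rewrite -(x_ltE x h) es e; have := h i; lia.
have h2 : i < r.
  rewrite -(x_ltE x h) er; have := h j; lia.
have h3 : x (i+1) <= x r by rewrite (x_le x h); lia.
have h4 : s <= j + 1 by rewrite -(x_le x h) es; lia.
have -> : j + 1 = s by lia.
done.
Qed.

Lemma shift_all (X : int -> bool) (x : int -> int) (p : int) :
  enumerates X x -> (forall n, X (n + p) = X n) ->
  forall n0, x n0 = x 0 + p -> forall i, x (i + n0) = x i + p.
Proof.
move=> E hp n0 e0.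
have [h hX] := E.
have up : forall i, x (i + n0) = x i + p -> x (i + 1 + n0) = x (i + 1) + p.
  by move=> i ei; rewrite addrAC; apply: shift_up X x p E hp _ _ ei.
have down : forall i, x (i + n0) = x i + p -> x (i - 1 + n0) = x (i - 1) + p.
  move=> i ei.
  have [s es] : exists s, x s = x (i - 1) + p.
    by apply/hX; rewrite hp; apply/hX; exists (i-1).
  have := shift_up X x p E hp _ _ es; rewrite subrK -ei => /(x_inj x h) es1.
  by rewrite -es; congr x; lia.
suff H : forall k : nat, x (k%:Z + n0) = x k%:Z + p /\ x (- k%:Z + n0) = x (- k%:Z) + p.
  move=> i; case: (lerP 0 i) => hi.
    by have := (H (absz i)).1; rewrite gez0_abs.
  by have := (H (absz i)).2; rewrite ltz0_abs // opprK.
elim=> [|k [IH1 IH2]]; first by rewrite oppr0 add0r.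
split.
  by have := up _ IH1; have -> : k%:Z + 1 = k.+1%:Z by lia.
by have := down _ IH2; have -> : - k%:Z - 1 = - k.+1%:Z by lia.
Qed.

Lemma int_all (P : int -> Prop) : P 0 -> (forall s, P s -> P (s + 1)) ->
  (forall s, P s -> P (s - 1)) -> forall s, P s.
Proof.
move=> P0 up down.
suff H : forall k : nat, P k%:Z /\ P (- k%:Z).
  move=> i; case: (lerP 0 i) => hi.
    by have := (H (absz i)).1; rewrite gez0_abs.
  by have := (H (absz i)).2; rewrite ltz0_abs // opprK.
elim=> [|k [IH1 IH2]]; first by rewrite oppr0.
split.
  by have := up _ IH1; have -> : k%:Z + 1 = k.+1%:Z by lia.
by have := down _ IH2; have -> : - k%:Z - 1 = - k.+1%:Z by lia.
Qed.

Lemma psum_shift (f : int -> int) (n : nat) : (forall i, f (i + n%:Z) = f i) ->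
  forall s, \sum_(k < n) f (s + k%:Z) = \sum_(k < n) f (k%:Z).
Proof.
move=> hf.
have step : forall s, \sum_(k < n) f (s + 1 + k%:Z) = \sum_(k < n) f (s + k%:Z).
  move=> s; case: n hf => [|n] hf; first by rewrite !big_ord0.
  rewrite big_ord_recr big_ord_recl /= addr0.
  have -> : s + 1 + n%:Z = s + n.+1%:Z by lia.
  rewrite hf addrC; congr (_ + _); apply: eq_bigr => k _ /=.
  by congr f; rewrite /bump /=; lia.
apply: int_all.
- by apply: eq_bigr => k _; rewrite add0r.
- by move=> s <-; rewrite step.
- by move=> s <-; rewrite -step subrK.
Qed.

Lemma antisym_zero (g : int -> int -> int) (n m : nat) :
  (forall i j, g i j = - g j i) -> (forall i j, g (i + n%:Z) (j + n%:Z) = g i j) ->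
  \sum_(j < n) \sum_(k < (2 * m).+1) g (j%:Z - m%:Z + k%:Z) j%:Z = 0.
Proof.
move=> ga gp.
rewrite exchange_big /=.
set S := fun k : nat => \sum_(j < n) g (j%:Z - m%:Z + k%:Z) j%:Z.
have HS : forall k : 'I_(2 * m).+1, S (rev_ord k) = - S k.
  move=> k; have kb := ltn_ord k; rewrite /S /= -sumrN.
  set e := (k%:Z - m%:Z).
  have hp : forall i, g (i + n%:Z + e) (i + n%:Z) = g (i + e) i.
    by move=> i; rewrite -(gp (i + e) i); congr g; lia.
  have := psum_shift (fun i => g (i + e) i) n hp (- e).
  move=> /= H.
  transitivity (\sum_(j < n) - g (- e + j%:Z + e) (- e + j%:Z)).
    apply: eq_bigr => j _; rewrite ga; congr (- g _ _); rewrite /e; lia.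
  rewrite sumrN H -sumrN; apply: eq_bigr => j _; congr (- g _ _); rewrite /e; lia.
have : \sum_(k < (2 * m).+1) S k = \sum_(k < (2 * m).+1) S (rev_ord k).
  by rewrite (reindex_inj rev_ord_inj).
rewrite (eq_bigr _ (fun k _ => HS k)) sumrN => H.
change (\sum_(k < (2 * m).+1) S k = 0).
by move/eqP: H; rewrite -addr_eq0 -mulr2n mulrn_eq0 /= => /eqP.
Qed.

Lemma isum_sym (i : int) (m : nat) (f : int -> int) :
  isum (i - m%:Z) (i + m%:Z) f = \sum_(k < (2 * m).+1) f (i - m%:Z + k%:Z).
Proof.
rewrite /isum; have -> : absz (i + m%:Z - (i - m%:Z) + 1) = (2 * m).+1 by lia.
by [].
Qed.

Lemma bsum_tel (x : int -> int) (N : nat) :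
  \sum_(j < N) bsize x j%:Z = x N%:Z - x 0.
Proof.
elim: N => [|N IH]; first by rewrite big_ord0 subrr.
rewrite big_ord_recr /= IH /bsize.
have -> : N%:Z + 1 = N.+1%:Z by lia.
lia.
Qed.

Lemma main_ineq (a b t c : nat) (x : int -> int) (d : int -> int -> int) (m : nat)
  (d' : int -> int -> int) (m' : nat) (n p : nat) :
  block_rule_local x d m -> frame_rule_local x t d' m' ->
  (forall j : int, c%:Z <= nuprime a b t x d m d' m' j) ->
  (forall i, x (i + n%:Z) = x i + p%:Z) ->
  (c * n)%:Z <= t%:Z * (a%:Z * p%:Z - b%:Z * n%:Z).
Proof.
move=> [da [D HD]] [da' [D' HD']] hc hx.
have bs_per : forall i, bsize x (i + n%:Z) = bsize x i.
  move=> i; rewrite /bsize; have := hx (i + 1); have := hx i.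
  have -> : i + n%:Z + 1 = i + 1 + n%:Z by lia.
  lia.
have bw_per : forall i, bwindow x m (i + n%:Z) = bwindow x m i.
  move=> i; apply: eq_map => k; rewrite -(bs_per (i - m%:Z + k%:Z)); congr bsize; lia.
have fs_per : forall i, fstruct x t (i + n%:Z) = fstruct x t i.
  move=> i; apply: eq_map => k; rewrite -(bs_per (i + k%:Z)); congr bsize; lia.
have fw_per : forall i, fwindow x t m' (i + n%:Z) = fwindow x t m' i.
  move=> i; apply: eq_map => k; rewrite -(fs_per (i - m'%:Z + k%:Z)); congr fstruct; lia.
have d_per : forall i j, d (i + n%:Z) (j + n%:Z) = d i j.
  move=> i j; have [h1 h2] := HD (i + n%:Z) (j + n%:Z); have [h1' h2'] := HD i j.
  have e : x (i + n%:Z) - x (j + n%:Z) = x i - x j by rewrite !hx; lia.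
  rewrite e in h1 h2.
  case: (ltrP m%:Z `|x i - x j|) => hm; first by rewrite h1 // h1'.
  rewrite h2 // h2' // bw_per; congr D; lia.
have d'_per : forall i j, d' (i + n%:Z) (j + n%:Z) = d' i j.
  move=> i j; have [h1 h2] := HD' (i + n%:Z) (j + n%:Z); have [h1' h2'] := HD' i j.
  have e : i + n%:Z - (j + n%:Z) = i - j by lia.
  rewrite e in h1 h2.
  case: (ltrP m'%:Z `|i - j|) => hm; first by rewrite h1 // h1'.
  rewrite h2 // h2' // fw_per; congr D'; lia.
have mus_per : forall i, mustar a b x d m (i + n%:Z) = mustar a b x d m i.
  move=> i; rewrite /mustar !isum_sym /mu bs_per; congr (_ + _).
  apply: eq_bigr => k _; rewrite -(d_per (i - m%:Z + k%:Z) i); congr d; lia.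
have Smu : \sum_(j < n) mustar a b x d m j%:Z = a%:Z * p%:Z - b%:Z * n%:Z.
  rewrite /mustar big_split /= /mu.
  have -> : \sum_(j < n) isum (j%:Z - m%:Z) (j%:Z + m%:Z) (fun j0 => d j0 j%:Z) = 0.
    rewrite (eq_bigr _ (fun (j : 'I_n) _ => isum_sym (nat_of_ord j)%:Z m _)).
    exact: (antisym_zero d n m da d_per).
  rewrite addr0 sumrB -mulr_sumr bsum_tel.
  have := hx 0; rewrite add0r => ->.
  rewrite sumr_const card_ord; lia.
have Snu : \sum_(j < n) nustar a b t x d m j%:Z = t%:Z * (a%:Z * p%:Z - b%:Z * n%:Z).
  rewrite /nustar exchange_big /=.
  rewrite (eq_bigr (fun _ => \sum_(j < n) mustar a b x d m j%:Z)); last first.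
    move=> l _; rewrite -(psum_shift _ n mus_per l); apply: eq_bigr => j _.
    by rewrite addrC.
  by rewrite sumr_const card_ord Smu -mulr_natl natz.
have Snp : \sum_(j < n) nuprime a b t x d m d' m' j%:Z = t%:Z * (a%:Z * p%:Z - b%:Z * n%:Z).
  rewrite /nuprime big_split /= Snu.
  have -> : \sum_(j < n) isum (j%:Z - m'%:Z) (j%:Z + m'%:Z) (fun i => d' i j%:Z) = 0.
    rewrite (eq_bigr _ (fun (j : 'I_n) _ => isum_sym (nat_of_ord j)%:Z m' _)).
    exact: (antisym_zero d' n m' da' d'_per).
  by rewrite addr0.
rewrite -Snp.
have -> : (c * n)%:Z = \sum_(j < n) c%:Z by rewrite sumr_const card_ord; lia.
by apply: ler_sum => j _.
Qed.

Lemma per_mul (f : int -> int) (n : int) : (forall i, f (i + n) = f i) ->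
  forall k i, f (i + k * n) = f i.
Proof.
move=> hf; apply: int_all.
- by move=> i; rewrite mul0r addr0.
- move=> k IH i; rewrite mulrDl mul1r addrA hf; exact: IH.
- move=> k IH i; rewrite -(IH i) -(hf (i + (k - 1) * n)); congr f; lia.
Qed.

Lemma E_bound (x : int -> int) (n p : nat) : (forall i, x i < x (i+1)) ->
  (0 < n)%N -> (forall i, x (i + n%:Z) = x i + p%:Z) ->
  forall i, `|p%:Z * i - n%:Z * (x i - x 0)| < n%:Z * p%:Z.
Proof.
move=> h n0 hx.
set E := fun i => p%:Z * i - n%:Z * (x i - x 0).
have Ep : forall i, E (i + n%:Z) = E i by move=> i; rewrite /E hx; lia.
have Eb : forall i, 0 <= i < n%:Z -> `|E i| < n%:Z * p%:Z.
  move=> i /andP[i0 i1].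
  have h1 : x 0 <= x i by rewrite (x_le x h).
  have h2 : x i < x n%:Z by rewrite (x_ltE x h).
  have := hx 0; rewrite add0r => e.
  rewrite /E; have : 0 <= n%:Z * (x i - x 0) < n%:Z * p%:Z by nia.
  have : 0 <= p%:Z * i < n%:Z * p%:Z by nia.
  lia.
move=> i.
have -> : i = (i %% n%:Z)%Z + (i %/ n%:Z)%Z * n%:Z by rewrite addrC -divz_eq.
change (`|E ((i %% n%:Z)%Z + (i %/ n%:Z)%Z * n%:Z)| < n%:Z * p%:Z).
rewrite (per_mul E n%:Z Ep); apply: Eb.
rewrite modz_ge0 ?ltz_pmod //; lia.
Qed.

Lemma count_bound (X : int -> bool) (x : int -> int) (n p N : nat) :
  enumerates X x -> (0 < n)%N -> (0 < p)%N ->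
  (forall i, x (i + n%:Z) = x i + p%:Z) ->
  (countX X N <= 2 * ((n * (N + (absz (x 0%R) + p))) %/ p) + 1)%N.
Proof.
move=> [h hX] n0 p0 hx.
set L := ((n * (N + (absz (x 0%R) + p))) %/ p)%N.
rewrite /countX.
have -> : (\sum_(k < (2 * N).+1) nat_of_bool (X (Posz k - Posz N)%R))%N
    = #|[set k : 'I_(2 * N).+1 | X (Posz k - Posz N)%R]|.
  rewrite -sum1dep_card [RHS]big_mkcond /=; apply: eq_bigr => k _.
  by case: (X _).
set g := fun j : 'I_(2 * L).+1 =>
  (inord (absz (x (Posz j - Posz L) + Posz N)) : 'I_(2 * N).+1).
apply: (@leq_trans #|g @: [set: 'I_(2 * L).+1]|).
  apply: subset_leq_card; apply/fintype.subsetP => k; rewrite inE => Xk.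
  have kb := ltn_ord k.
  have [i xi] : exists i, x i = Posz k - Posz N by apply/hX.
  have Eb := E_bound x n p h n0 hx i.
  have iL : (absz i <= L)%N.
    rewrite /L leq_divRL //.
    have hxi : `|x i| <= Posz N by rewrite xi; lia.
    have hB : `|n%:Z * (x i - x 0)| <= n%:Z * (N%:Z + `|x 0|).
      rewrite normrM ger0_norm // ler_wpM2l //; lia.
    have hA : `|p%:Z * i| = p%:Z * `|i| by rewrite normrM ger0_norm.
    have T : `|p%:Z * i| < n%:Z * p%:Z + n%:Z * (N%:Z + `|x 0|).
      move: Eb hB; generalize (p%:Z * i) (n%:Z * (x i - x 0)) (n%:Z * p%:Z) (n%:Z * (N%:Z + `|x 0|)) => A B C D' h1 h2.
      apply: (le_lt_trans (y := `|A - B| + `|B|)); first by rewrite -{1}(subrK B A) ler_normD.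
      lia.
    rewrite hA -!abszE in T; move: T; generalize (absz i) (absz (x 0)) => u v; nia.
  apply/imsetP; exists (inord (absz (i + Posz L))); first by rewrite inE.
  have e1 : Posz (absz (i + Posz L)) - Posz L = i by lia.
  apply: val_inj; rewrite /g /= !inordK ?e1 ?xi; lia.
rewrite (leq_trans (leq_imset_card _ _)) // cardsT card_ord; lia.
Qed.

Lemma dens_le (R : realType) (X : int -> bool) (q : R) (K n p : nat) :
  (0 < p)%N -> q = n%:R / p%:R ->
  (forall N, countX X N <= 2 * ((n * (N + K)) %/ p) + 1)%N ->
  (density R X <= q%:E)%E.
Proof.
move=> p0 qdef hc.
have pR : (0 : R) < p%:R by rewrite ltr0n.
have q0 : 0 <= q by rewrite qdef divr_ge0 // ler0n.
rewrite /density limn_esup_lim.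
apply/lee_addgt0Pr => e e0.
set C := 2 * q * K%:R + 1.
have C0 : 0 <= C / e.
  by rewrite divr_ge0 ?(ltW e0) // /C; have := ler0n R K; nra.
set K0 := Num.bound (C / e).
apply: lime_le; first exact: is_cvg_esups.
exists K0 => // N /= hN.
apply: ge_ereal_sup => _ [k /= Nk <-].
rewrite lee_fin.
have hk : (K0 <= k)%N by apply: leq_trans hN Nk.
have hb := archi_boundP C0.
have hkR : C / e < k%:R.
  by apply: (lt_le_trans hb); rewrite ler_nat.
rewrite ltr_pdivrMr // in hkR.
set L := ((n * (k + K)) %/ p)%N.
have h1 : (countX X k)%:R <= 2 * L%:R + 1 :> R.
  by have := hc k; rewrite -(ler_nat R) natrD natrM.
have h2 : L%:R <= q * (k%:R + K%:R) :> R.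
  have := leq_divM (n * (k + K)) p; rewrite -(ler_nat R) natrM natrM natrD.
  by rewrite -ler_pdivlMr // qdef mulrAC.
have e2 : ((2 * k).+1)%:R = 2 * k%:R + 1 :> R.
  by rewrite -addn1 natrD natrM.
rewrite e2 ler_pdivrMr; last by have := ler0n R k; nra.
have := ler0n R k; have := ler0n R K; rewrite /C in hkR; nra.
Qed.

Theorem lemma21 (R : realType) (S : seq nat) (a b t c : nat)
  (X : int -> bool) (x : int -> int)
  (d : int -> int -> int) (m : nat) (d' : int -> int -> int) (m' : nat) :
  S != [::] -> all (fun s => (0 < s)%N) S ->
  (0 < a)%N -> (0 < b)%N -> (0 < t)%N ->
  independent S X -> periodic_set X -> enumerates X x ->
  block_rule_local x d m ->
  frame_rule_local x t d' m' ->
  (forall j : int, c%:Z <= nuprime a b t x d m d' m' j) ->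
  (density R X <= ((a * t)%:R / (b * t + c)%:R : R)%:E)%E.
Proof.
move=> _ _ a0 b0 t0 _ [p [p0 hp]] E hd hd' hc.
have [h hX] := E.
have [n0 e0] : exists n0, x n0 = x 0 + p%:Z.
  by apply/hX; rewrite hp; apply/hX; exists 0.
have hx := shift_all X x p%:Z E hp n0 e0.
have n0pos : 0 < n0.
  have : x 0 < x n0 by rewrite e0; lia.
  by rewrite (x_ltE x h).
have hn : n0 = (absz n0)%:Z by lia.
set n := absz n0; rewrite hn in hx.
have np : (0 < n)%N by lia.
have Hm := main_ineq a b t c x d m d' m' n p hd hd' hc hx.
apply: (@le_trans _ _ ((n%:R / p%:R : R)%:E)).
  apply: (dens_le R X _ (absz (x 0%R) + p) n p p0 erefl) => N.
  exact: count_bound X x n p N E np p0 hx.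
rewrite lee_fin ler_pdivrMr ?ltr0n // mulrAC ler_pdivlMr; last first.
  by rewrite ltr0n; lia.
rewrite -!natrM ler_nat; lia.
Qed.
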